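(* With the notation of the context below, the following hold: (1) As a polynomial in $\alpha$ and $\beta$, the polynomial $d_2(r)$ cannot be divided by $\beta-\alpha$. (2) The polynomial $c_2(r)$ does not have roots $r = \pm 2$. (3) The polynomial $c_2(r)$ is separable.
   Context: Let $K$ be a field of characteristic $p \geq 5$ with $p \equiv 5 \pmod{6}$. Consider the quartic $F := x^3z + y^4 + ry^2z^2 + z^4$. Let $c_2(r)$ denote the coefficient of $x^{2p-1}y^{p-1}z^{p-2}$ in $F^{p-1}$, regarded as a polynomial in $r$. Let $d_2(r)$ denote the coefficient of $y^{p-1}$ in $(y^4+ry^2+1)^{(p-2)/3}$; one has $d_2(r) = \binom{p-1}{(p-2)/3} c_2(r)$. Write $y^4 + ry^2 + 1 = (y^2+\alpha)(y^2+\beta)$, i.e. $\alpha+\beta = r$ and $\alpha\beta = 1$, so that $d_2(r)$ becomes the symmetric polynomial $d_2(r) = \sum_{i+j=(p-5)/6}\binom{(p-2)/3}{i}\binom{(p-2)/3}{j}\alpha^i\beta^j$ in $\alpha$ and $\beta$; in particular $r^2-4 = (\beta-\alpha)^2$. *)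

(* Defs.v *)
From HB Require Import structures.
From mathcomp Require Import all_boot all_order all_algebra all_field.
From mathcomp Require Import mpoly.
Set Implicit Arguments. Unset Strict Implicit. Unset Printing Implicit Defensive.
Import GRing.Theory.
Local Open Scope ring_scope.

(* The quartic F = x^3 z + y^4 + r y^2 z^2 + z^4, with variables
   x = 'X_0, y = 'X_1, z = 'X_2 and coefficients in K[r] = {poly K}
   (r is the polynomial variable 'X of {poly K}). *)
Definition Fquartic (K : fieldType) : {mpoly {poly K}[3]} :=
  'X_(inord 0) ^+ 3 * 'X_(inord 2) + 'X_(inord 1) ^+ 4
  + ('X : {poly K})%:MP * 'X_(inord 1) ^+ 2 * 'X_(inord 2) ^+ 2
  + 'X_(inord 2) ^+ 4.

Definition c2 (K : fieldType) (p : nat) : {poly K} :=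
  (Fquartic K ^+ (p - 1))@_[multinom [tuple (2 * p - 1)%N; (p - 1)%N; (p - 2)%N]].

(* d_2 written as a polynomial in alpha = 'X_0 and beta = 'X_1:
   sum_{i+j=(p-5)/6} C((p-2)/3, i) C((p-2)/3, j) alpha^i beta^j. *)
Definition d2ab (K : fieldType) (p : nat) : {mpoly K[2]} :=
  let m := ((p - 2) %/ 3)%N in
  let n := ((p - 5) %/ 6)%N in
  \sum_(i < n.+1)
    (('C(m, i) * 'C(m, n - i))%:R : K) *: ('X_(inord 0) ^+ i * 'X_(inord 1) ^+ (n - i)).

(* Main.v *)
Require Import Defs.
From HB Require Import structures.
From mathcomp Require Import all_boot all_order all_algebra all_field.
From mathcomp Require Import mpoly.
From mathcomp Require Import zify ring.
From Stdlib Require Import Classical.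
Import GRing.Theory.
Local Open Scope ring_scope.

Module Helpers.
Set Implicit Arguments. Unset Strict Implicit. Unset Printing Implicit Defensive.
Lemma ndvd_fact p a : prime p -> (a < p)%N -> ~~ (p %| a`!)%N.
Proof.
move=> hp; elim: a => [|a IH] ha; first by rewrite fact0 dvdn1 neq_ltn prime_gt1 ?orbT.
rewrite factS Euclid_dvdM // negb_or IH ?andbT; last by apply: ltnW.
by rewrite gtnNdvd.
Qed.

Lemma ndvd_bin p a b : prime p -> (a < p)%N -> (b <= a)%N -> ~~ (p %| 'C(a, b))%N.
Proof.
move=> hp ha hb; apply: contra (ndvd_fact hp ha) => H.
by rewrite -(bin_fact hb) dvdn_mulr.
Qed.

Lemma natr_neq0 (K : fieldType) p k : p \in [pchar K] -> (0 < k < p)%N -> (k%:R : K) != 0.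
Proof.
move=> hp /andP[k0 kp]; rewrite -(dvdn_pcharf hp) gtnNdvd //.
Qed.

Lemma bin_neq0 (K : fieldType) p a b : p \in [pchar K] -> (a < p)%N -> (b <= a)%N -> ('C(a, b)%:R : K) != 0.
Proof.
move=> hp ha hb; rewrite -(dvdn_pcharf hp); apply: ndvd_bin => //; exact: pcharf_prime hp.
Qed.

Lemma part1 (K : fieldType) (p : nat) :
  p \in [pchar K] -> (5 <= p)%N -> (p %% 6 = 5)%N ->
  ~ (exists q : {mpoly K[2]}, d2ab K p = ('X_(inord 1) - 'X_(inord 0)) * q).
Proof.
move=> hp p5 p6 [q Hq].
have := congr1 (meval (fun _ => (1 : K))) Hq.
rewrite mevalM mevalB !mevalXU subrr mul0r /d2ab raddf_sum /=.
under eq_bigr => i _ do rewrite mevalZ mevalM !rmorphXn /= !mevalXU !expr1n !mulr1.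
rewrite -natr_sum binomial.Vandermonde; apply/eqP; apply: bin_neq0 hp _ _; lia.
Qed.

Definition Acoef (m N k : nat) : nat :=
  if ((k <= N) && ((N - k) %% 2 == 0))%N then ('C(m, (N - k) %/ 2) * 'C(m - (N - k) %/ 2, k))%N else 0%N.

Lemma binrel m b k : (b < m)%N ->
  (k.+2 * k.+1 * 'C(m, b) * 'C((m - b.+1).+1, k.+2) = b.+1 * (m - b.+1 - k) * 'C(m, b.+1) * 'C(m - b.+1, k))%N.
Proof.
move=> hb; set s := (m - b.+1)%N.
have H1 : (k.+2 * 'C(s.+1, k.+2) = (s - k) * 'C(s.+1, k.+1))%N.
  by rewrite mul_bin_left subSS.
have H2 : (s.+1 * 'C(s, k) = k.+1 * 'C(s.+1, k.+1))%N by rewrite mul_bin_diag.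
have H3 : (b.+1 * 'C(m, b.+1) = s.+1 * 'C(m, b))%N.
  by rewrite mul_bin_left; congr (_ * _)%N; rewrite /s; lia.
have H1' := congr1 (muln (k.+1 * 'C(m, b))) H1.
have H2' := congr1 (muln ((s - k) * 'C(m, b))) H2.
have H3' := congr1 (muln ((s - k) * 'C(s, k))) H3.
nia.
Qed.

Lemma Aode m N k : (N <= 2 * m)%N ->
  (4 * (k.+2 * k.+1) * Acoef m N k.+2 + 2 * m * k * Acoef m N k + N * N * Acoef m N k
   = k * k * Acoef m N k + 2 * m * N * Acoef m N k)%N.
Proof.
move=> hN; rewrite /Acoef.
have [c|nc] := boolP ((k <= N) && ((N - k) %% 2 == 0))%N; last first.
  rewrite (_ : ((k.+2 <= N) && ((N - k.+2) %% 2 == 0))%N = false) ?muln0 //.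
  apply/negP => /andP[h1 /eqP h2]; move/negP: nc; apply; apply/andP; split; [lia | apply/eqP; lia].
move: c => /andP[c1 /eqP c2].
set b := ((N - k) %/ 2)%N.
have Nb : N = (2 * b + k)%N by rewrite /b; lia.
have bm : (b <= m)%N by lia.
case Eb : b => [|b'].
  rewrite (_ : ((k.+2 <= N) && ((N - k.+2) %% 2 == 0))%N = false); last by apply/negP => /andP[]; lia.
  rewrite muln0 add0n.
  have Nk : N = k by lia.
  rewrite Nk; nia.
rewrite (_ : ((k.+2 <= N) && ((N - k.+2) %% 2 == 0))%N = true); last by apply/andP; split; [lia|apply/eqP; lia].
have -> : ((N - k.+2) %/ 2 = b')%N by lia.
have hb' : (b' < m)%N by lia.
have := binrel k hb'.
have -> : ((m - b'.+1).+1 = m - b')%N by lia.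
move=> HB.
have E4 : (4 * (k.+2 * k.+1) * ('C(m, b') * 'C(m - b', k.+2))
   = 4 * (b'.+1 * (m - b'.+1 - k) * 'C(m, b'.+1) * 'C(m - b'.+1, k)))%N by rewrite -HB; lia.
rewrite E4.
have [ks|ks] := leqP k (m - b'.+1).
  nia.
rewrite (bin_small ks) !muln0; lia.
Qed.

Definition gpoly (K : fieldType) (m N : nat) : {poly K} :=
  \sum_(b < m.+1) \sum_(c < (m - b).+1) ('X^c *+ ('C(m, b) * 'C(m - b, c) * (2 * b + c == N))%N).

Lemma natb_mul (R : pzSemiRingType) (b : bool) n : (b%:R : R) *+ n = if b then n%:R else 0.
Proof. by case: b; rewrite ?mul0rn. Qed.

Lemma gcoef (K : fieldType) m N k : (N <= 2 * m)%N -> (gpoly K m N)`_k = (Acoef m N k)%:R.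
Proof.
move=> hN; rewrite /gpoly coef_sum.
under eq_bigr => b _ do rewrite coef_sum.
under eq_bigr => b _ do under eq_bigr => c _ do rewrite coefMn coefXn eq_sym natb_mul.
under eq_bigr => b _ do rewrite -big_mkcond
  (big_ord1_eq _ (fun c => (('C(m, b) * 'C(m - b, c) * (2 * b + c == N))%N)%:R : K)).
set b0 := ((N - k) %/ 2)%N.
have hb0 : (b0 < m.+1)%N by rewrite /b0; lia.
rewrite (eq_bigr (fun b : 'I_m.+1 => if (b == b0 :> nat) then (Acoef m N k)%:R else 0)).
  by rewrite -big_mkcond (big_ord1_eq _ (fun _ => (Acoef m N k)%:R : K)) hb0.
move=> b _; have [Eb|Nb] := eqVneq (b : nat) b0.
  rewrite /Acoef -/b0 -Eb.
  have [c|nc] := boolP ((k <= N) && ((N - k) %% 2 == 0))%N.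
    have -> : (2 * b + k == N)%N by apply/eqP; move/andP: c => [c1 /eqP c2]; rewrite Eb /b0; lia.
    by rewrite muln1; case: ltnP => // hk; rewrite (bin_small hk) ?muln0.
  have -> : (2 * b + k == N)%N = false.
    apply/negP => /eqP E; move/negP: nc; apply; apply/andP; split; [lia| apply/eqP; lia].
  by rewrite muln0; case: ifP.
have -> : (2 * b + k == N)%N = false by apply/negP => /eqP E; apply/negP: Nb; apply/negPn/eqP; rewrite /b0; lia.
by rewrite muln0; case: ifP.
Qed.

Lemma coefL1 (K : fieldType) (g : {poly K}) k : ('X^2 * g^`(2))`_k = g`_k *+ (k * k.-1).
Proof.
rewrite coefXnM; case: ltnP => [|hk]; first by case: k => [|[|]].
rewrite coef_derivn; case: k hk => [|[|k]] // _.
by rewrite subn2 /= ffactnS ffactn1 add2n.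
Qed.

Lemma coefL2 (K : fieldType) (g : {poly K}) k : ('X * g^`())`_k = g`_k *+ k.
Proof. by rewrite coefXM coef_deriv; case: k => [|k] //=; rewrite mulr0n. Qed.

Lemma coefL3 (K : fieldType) (g : {poly K}) k : g^`(2)`_k = g`_k.+2 *+ (k.+2 * k.+1).
Proof. by rewrite coef_derivn ffactnS ffactn1 add2n. Qed.

Lemma gode (K : fieldType) m N : (N <= 2 * m)%N ->
  (4%:R - 'X^2) * (gpoly K m N)^`(2) + ((2 * m)%:R - 1) *: ('X * (gpoly K m N)^`())
  + (N%:R * N%:R - (2 * m * N)%:R) *: gpoly K m N = 0.
Proof.
move=> hN; apply/polyP => k; rewrite coef0.
rewrite mulrBl !coefD coefN !coefZ (mulr_natl _ 4) coefMn coefL1 coefL2 coefL3.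
rewrite !gcoef //.
have H := Aode k hN.
set A2 := Acoef m N k.+2 in H *; set A := Acoef m N k in H *.
transitivity (((4 * (k.+2 * k.+1) * A2 + 2 * m * k * A + N * N * A)%N%:R : K)
   - (k * k * A + 2 * m * N * A)%N%:R); last by rewrite H subrr.
clear H; case: k A2 A => [|k] A2 A; rewrite ?succnK; ring.
Qed.

Lemma expand3 (R : comNzRingType) (u v w : R) m :
  (u + (v + w)) ^+ m = \sum_(b < m.+1) \sum_(c < (m - b).+1)
     (u ^+ b * v ^+ c * w ^+ (m - b - c)) *+ ('C(m, b) * 'C(m - b, c)).
Proof.
rewrite [u + _]addrC exprDn; apply: eq_bigr => b _.
rewrite [v + w]addrC exprDn mulr_suml -sumrMnl; apply: eq_bigr => c _.
rewrite mulrnAl -mulrnA mulrC !mulrA.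
by rewrite mulnC -!mulrA [w ^+ _ * _]mulrC.
Qed.

Lemma gpoly_horner (K : fieldType) m N (x : K) :
  (gpoly K m N).[x] = (('X^2 + (x *: 'X + 1)) ^+ m)`_N.
Proof.
rewrite expand3 coef_sum horner_sum; apply: eq_bigr => b _.
rewrite coef_sum horner_sum; apply: eq_bigr => c _.
rewrite hornerMn hornerXn coefMn expr1n mulr1 exprZn -scalerAr -exprM -exprD coefZ coefXn eq_sym.
by case: (_ == _); rewrite ?muln1 ?muln0 ?mulr1 ?mulr0 ?mul0rn.
Qed.

Lemma coef_binom (K : fieldType) (c : K) n N :
  (N <= n)%N -> ((1 + c *: 'X) ^+ n)`_N = c ^+ N * ('C(n, N))%:R.
Proof.
move=> hN; rewrite exprDn coef_sum.
rewrite (eq_bigr (fun i : 'I_n.+1 => if (i == N :> nat) then c ^+ N * ('C(n, N))%:R else 0)).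
  by rewrite -big_mkcond (big_ord1_eq _ (fun _ => c ^+ N * ('C(n, N))%:R)) ltnS hN.
move=> i _; rewrite expr1n mul1r exprZn coefMn coefZ coefXn eq_sym.
case: eqP => [->|_]; first by rewrite mulr1 mulr_natr.
by rewrite mulr0 mul0rn.
Qed.

Lemma gpoly_pm2 (K : fieldType) m N (c : K) : c ^+ 2 = 1 -> (N <= 2 * m)%N ->
  (gpoly K m N).[2 * c] = c ^+ N * ('C(2 * m, N))%:R.
Proof.
move=> hc hN; rewrite gpoly_horner.
have h : (c%:P) ^+ 2 = 1 :> {poly K} by rewrite -rmorphXn /= hc.
have -> : 'X^2 + ((2 * c) *: 'X + 1) = (1 + c *: 'X) ^+ 2 :> {poly K}.
  rewrite -!mul_polyC polyCM.
  transitivity (c%:P ^+ 2 * 'X^2 + (2%:P * c%:P * 'X + 1) : {poly K}); first by rewrite h mul1r.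
  have -> : (2%:P : {poly K}) = 2%:R by rewrite polyC_natr.
  ring.
by rewrite -exprM coef_binom.
Qed.

Lemma size_gpoly (K : fieldType) m N : (N <= 2 * m)%N -> (size (gpoly K m N) <= m.+1)%N.
Proof.
move=> hN; apply/leq_sizeP => k hk; rewrite gcoef // /Acoef.
case: ifP => // _; rewrite (@bin_small (m - _) k) ?muln0 //; lia.
Qed.

Section S.
Variable K : fieldType.
Local Notation X0 := ('X_(inord 0) : {mpoly {poly K}[3]}).
Local Notation X1 := ('X_(inord 1) : {mpoly {poly K}[3]}).
Local Notation X2 := ('X_(inord 2) : {mpoly {poly K}[3]}).
Local Notation P := ('X : {poly K}).

Definition Mon (x y z : nat) : 'X_{1..3} :=
  (U_(inord 0) *+ x + U_(inord 1) *+ y + U_(inord 2) *+ z)%MM.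

Lemma termE e a b c :
  ((X1 ^+ 4) ^+ b * (P%:MP * X1 ^+ 2 * X2 ^+ 2) ^+ c * (X2 ^+ 4) ^+ e) * (X0 ^+ 3 * X2) ^+ a
  = (P ^+ c)%:MP * 'X_[Mon (3 * a) (4 * b + 2 * c) (a + 2 * c + 4 * e)].
Proof.
rewrite /Mon !mpolyXD -!mpolyXn !exprMn rmorphXn.
rewrite [(3 * a)%N]mulnC [(4 * b)%N]mulnC [(2 * c)%N]mulnC [(4 * e)%N]mulnC !exprD !exprM.

ring.
Qed.

Lemma MonE x y z (i : 'I_3) : Mon x y z i = nth 0%N [:: x; y; z] i.
Proof.
rewrite /Mon !mnmDE !mulmnE !mnm1E -!val_eqE /= !inordK //.
by case: i => [[|[|[|i]]] Hi] //=; lia.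
Qed.

Lemma tupE x y z (i : 'I_3) : ([multinom [tuple x; y; z]] : 'X_{1..3}) i = nth 0%N [:: x; y; z] i.
Proof. by rewrite mnm_tnth (tnth_nth 0%N). Qed.

Lemma monE x y z x' y' z' :
  (Mon x y z == [multinom [tuple x'; y'; z']]) = [&& x == x', y == y' & z == z'].
Proof.
apply/eqP/and3P => [/mnmP H|[/eqP-> /eqP-> /eqP->]].
  have := H (inord 0); have := H (inord 1); have := H (inord 2).
  rewrite !MonE !tupE !inordK //= => H2 H1 H0; by rewrite H0 H1 H2 !eqxx.
by apply/mnmP => i; rewrite MonE tupE.
Qed.

Lemma coefA q a : (a <= 6 * q + 4)%N ->
  ((X1 ^+ 4 + (P%:MP * X1 ^+ 2 * X2 ^+ 2 + X2 ^+ 4)) ^+ (6 * q + 5 - 1 - a) * (X0 ^+ 3 * X2) ^+ a)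
     @_[multinom [tuple (2 * (6*q+5) - 1)%N; (6*q+5 - 1)%N; (6*q+5 - 2)%N]]
  = if a == (4 * q + 3)%N then gpoly K (2 * q + 1) (3 * q + 2) else 0.
Proof.
move=> ha; rewrite expand3 mulr_suml raddf_sum.
under eq_bigr => b _ do rewrite mulr_suml raddf_sum.
under eq_bigr => b _ do under eq_bigr => c _ do
  rewrite mulrnAl raddfMn /= termE mcoeffCM mcoeffX monE.
have [Ea|Na] := eqVneq a (4 * q + 3)%N.
  have Em : (6 * q + 5 - 1 - (4 * q + 3) = 2 * q + 1)%N by lia.
  rewrite Ea /gpoly Em; apply: eq_bigr => b _; apply: eq_bigr => c _.
  have hb := ltn_ord b; have hc := ltn_ord c.
  have -> : [&& (3 * (4 * q + 3))%N == (2 * (6 * q + 5) - 1)%N, (4 * b + 2 * c)%N == (6 * q + 5 - 1)%N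
      & (4 * q + 3 + 2 * c + 4 * (2 * q + 1 - b - c))%N == (6 * q + 5 - 2)%N] = (2 * b + c == 3 * q + 2)%N.
    apply/and3P/eqP => [[/eqP H1 /eqP H2 /eqP H3]|H]; first lia.
    split; apply/eqP; lia.
  by case: (_ == _)%N; rewrite ?mulr1 ?muln1 ?mulr0 ?muln0 ?mul0rn.
apply: big1 => b _; apply: big1 => c _.
have -> : ((3 * a)%N == (2 * (6 * q + 5) - 1)%N) = false by apply/eqP; lia.
by rewrite mulr0 mul0rn.
Qed.

Lemma c2E q : c2 K (6 * q + 5) = gpoly K (2 * q + 1) (3 * q + 2) *+ 'C(6 * q + 4, 4 * q + 3).
Proof.
rewrite /c2 /Fquartic -!addrA [_ * X2 + _]addrC exprDn raddf_sum /=.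
rewrite (bigD1 (inord (4 * q + 3))) //= big1 ?addr0.
  rewrite raddfMn /= coefA inordK ?eqxx //; try lia.
  by have -> : (6 * q + 5 - 1 = 6 * q + 4)%N by lia.
move=> a /eqP Na; rewrite raddfMn /= coefA; last by have := ltn_ord a; lia.
have [Ea|_] := eqVneq (a : nat) (4 * q + 3)%N; last by rewrite mul0rn.
exfalso; apply: Na; apply: val_inj => /=; rewrite inordK; lia.
Qed.
End S.

Lemma deriv2_pow (K : fieldType) (pi g : {poly K}) j :
  (pi ^+ j.+2 * g)^`(2) =
  pi ^+ j * (pi^`() ^+ 2 * g *+ (j.+2 * j.+1))
  + pi ^+ j.+1 * (pi^`(2) * g *+ j.+2 + pi^`() * g^`() *+ (2 * j.+2) + pi * g^`(2)).
Proof.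
have d1 : (pi ^+ j.+2 * g)^`() = pi^`() * pi ^+ j.+1 *+ j.+2 * g + pi ^+ j.+2 * g^`().
  by rewrite derivM deriv_exp succnK.
have d2 : (pi^`() * pi ^+ j.+1 *+ j.+2 * g)^`() =
   ((pi^`()^`() * pi ^+ j.+1 + pi^`() * (pi^`() * pi ^+ j *+ j.+1)) *+ j.+2) * g
   + (pi^`() * pi ^+ j.+1 *+ j.+2) * g^`().
  by rewrite derivM derivMn derivM deriv_exp succnK.
have d3 : (pi ^+ j.+2 * g^`())^`() = pi^`() * pi ^+ j.+1 *+ j.+2 * g^`() + pi ^+ j.+2 * g^`()^`().
  by rewrite derivM deriv_exp succnK.
rewrite !derivnS !derivn0 d1 derivD d2 d3.
rewrite !exprS; ring.
Qed.


Lemma irr_factor (K : fieldType) (u : {poly K}) :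
  (1 < size u)%N -> exists2 pi, irreducible_poly pi & pi %| u.
Proof.
move: {2}(size u) (leqnn (size u)) => n; elim: n u => [|n IH] u hs hu; first lia.
case: (classic (irreducible_poly u)) => [Hirr|Hn]; first by exists u; rewrite ?dvdpp.
have [q [sq qu nq]] : exists q : {poly K}, [/\ size q != 1%N, q %| u & ~~ (q %= u)].
  apply: NNPP => Hno; apply: Hn; split => // q sq qu; apply/negPn/negP => nq.
  by apply: Hno; exists q.
have u0 : u != 0 by rewrite -size_poly_gt0; lia.
have q0 : q != 0 by apply/eqP => q0; move: qu u0; rewrite q0 dvd0p => /eqP ->; rewrite eqxx.
have sqle := dvdp_leq u0 qu.
have sqne : size q != size u by rewrite dvdp_size_eqp.
have q1 : (1 < size q)%N by have := size_poly_gt0 q; rewrite q0; lia.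
have sqn : (size q <= n)%N.
  have lt : (size q < size u)%N by rewrite ltn_neqAle sqne sqle.
  by rewrite -ltnS; apply: leq_trans lt hs.
have [pi Hpi piq] := IH q sqn q1.
by exists pi => //; apply: dvdp_trans piq qu.
Qed.


Lemma deriv_neq0 (K : fieldType) p (u : {poly K}) : p \in [pchar K] ->
  (1 < size u <= p)%N -> u^`() != 0.
Proof.
move=> hp /andP[s1 sp].
have u0 : u != 0 by rewrite -size_poly_gt0; lia.
apply/eqP => H.
have := coef_deriv u (size u).-2.
rewrite H coef0 (_ : (size u).-2.+1 = (size u).-1)%N; last by lia.
move/esym/eqP; rewrite -mulr_natr mulf_eq0.
case/orP; first by rewrite -/(lead_coef u) lead_coef_eq0 (negbTE u0).
by apply/negP; apply: natr_neq0 hp _; lia.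
Qed.

Lemma root_of_lin (K : fieldType) (pi f : {poly K}) a :
  irreducible_poly pi -> pi %| f -> pi %| ('X - a%:P) -> root f a.
Proof.
move=> Hpi pif pia.
have s1 : (1 < size pi)%N := Hpi.1.
have s2 := dvdp_leq (negbT (polyXsubC_eq0 a)) pia.
rewrite size_XsubC in s2.
have E : pi %= 'X - a%:P by rewrite -dvdp_size_eqp // size_XsubC eqn_leq s2 s1.
by rewrite -dvdp_XsubCl -(eqp_dvdl _ E).
Qed.

Lemma sep_ode (K : fieldType) p (f : {poly K}) (c1 c0 : K) :
  p \in [pchar K] -> (size f <= p)%N -> f != 0 -> ~~ root f 2 -> ~~ root f (-2) ->
  (4%:R - 'X^2) * f^`(2) + c1 *: ('X * f^`()) + c0 *: f = 0 -> separable_poly f.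
Proof.
move=> hp hs f0 r2 rm2 ode.
apply/separable_polyP; split; last first.
  move=> u uf su; apply: deriv_neq0 hp _; rewrite su /=; exact: leq_trans (dvdp_leq f0 uf) hs.
apply/poly_square_freeP => u su; apply/negP => uf.
have u0 : u != 0.
  by apply/eqP => u0; move: uf f0; rewrite u0 expr0n /= dvd0p => /eqP ->; rewrite eqxx.
have su1 : (1 < size u)%N by rewrite ltn_neqAle eq_sym su size_poly_gt0.
have [pi Hpi piu] := irr_factor su1.
have pi0 := irredp_neq0 Hpi.
have pi1 : (1 < size pi)%N := Hpi.1.
have pif2 : pi ^+ 2 %| f := dvdp_trans (dvdp_exp2r 2 piu) uf.
have bnd : forall k, pi ^+ k %| f -> (k <= (size f).-1)%N.
  move=> k Hk; have h1 := dvdp_leq f0 Hk; have h2 := size_exp pi k.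
  have h3 : (k <= (size (pi ^+ k)).-1)%N by rewrite h2; apply: leq_pmull; lia.
  apply: leq_trans h3 _; rewrite -!subn1; exact: leq_sub2r.
have exk : exists k, pi ^+ k %| f by exists 2%N.
case: (ex_maxnP exk bnd) => k Hk Hmax.
have k2 : (2 <= k)%N := Hmax 2%N pif2.
have kp : (k < p)%N.
  have := bnd k Hk; have := size_poly_gt0 f; rewrite f0 => h; lia.
set g := f %/ pi ^+ k.
have fE : f = pi ^+ k * g by rewrite /g divpKC.
have npig : ~~ (pi %| g).
  apply/negP => H; have : pi ^+ k.+1 %| f.
    by rewrite fE exprSr dvdp_mul2l ?expf_neq0.
  by move/Hmax; rewrite ltnn.
move: k k2 Hk Hmax kp g fE npig => [|[|j]] // _ Hk Hmax kp g fE npig.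
have f1 : f^`() = pi ^+ j.+1 * (pi^`() * g *+ j.+2 + pi * g^`()).
  by rewrite fE derivM deriv_exp succnK !exprS; ring.
have f2 := deriv2_pow pi g j; rewrite -fE in f2.
move: ode; rewrite f1 f2 -!mul_polyC => ode.
set Q := pi^`() ^+ 2 * g *+ (j.+2 * j.+1) in ode.
set S := (pi^`(2) * g *+ j.+2 + pi^`() * g^`() *+ (2 * j.+2) + pi * g^`(2)) in ode.
set h1 := (pi^`() * g *+ j.+2 + pi * g^`()) in ode.
have key : pi ^+ j * ((4%:R - 'X^2) * Q + pi * ((4%:R - 'X^2) * S + c1%:P * ('X * h1) + c0%:P * g * pi)) = 0.
  by rewrite -ode fE !exprS; ring.
move/eqP: key; rewrite mulf_eq0 expf_eq0 (negbTE pi0) andbF /= => /eqP key.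
have d1 : pi %| (4%:R - 'X^2) * Q.
  have -> : (4%:R - 'X^2) * Q = - (pi * ((4%:R - 'X^2) * S + c1%:P * ('X * h1) + c0%:P * g * pi)).
    by apply/eqP; rewrite -subr_eq0 opprK key.
  by rewrite dvdpNr dvdp_mulIl.
have nn : ((j.+2 * j.+1)%:R : K) != 0.
  by rewrite natrM; apply: mulf_neq0; apply: (natr_neq0 hp); rewrite /= ?kp // ltnW.
move: d1; rewrite /Q -(scaler_nat (j.+2 * j.+1)) -scalerAr dvdpZr //.
rewrite mulrA expr2 !mulrA.
have cpg : coprimep pi g by rewrite irreducible_poly_coprime.
have cpd : coprimep pi pi^`().
  rewrite irreducible_poly_coprime //; apply/negP => H.
  have d0 : pi^`() != 0.
    apply: deriv_neq0 hp _; rewrite pi1 /=.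
    apply: leq_trans hs; apply: dvdp_leq f0 _; apply: dvdp_trans (dvdp_mulIl pi pi) _.
    by rewrite -expr2.
  by move: (dvdp_leq d0 H); rewrite leqNgt lt_size_deriv.
rewrite Gauss_dvdpl // Gauss_dvdpl // Gauss_dvdpl //.
have -> : (4%:R - 'X^2 : {poly K}) = - (('X - 2%:P) * ('X - (-2)%:P)).
  by rewrite rmorphN /=; ring.
rewrite dvdpNr => d2.
have pif : pi %| f by apply: dvdp_trans pif2; rewrite expr2 dvdp_mulIl.
case: (boolP (pi %| 'X - 2%:P)) => [H|H].
  by move/negP: r2; apply; apply: root_of_lin Hpi pif H.
move: d2; rewrite Gauss_dvdpr; last by rewrite irreducible_poly_coprime.
by move=> H'; move/negP: rm2; apply; apply: root_of_lin Hpi pif H'.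
Qed.

End Helpers.
Import Helpers.
Unset Implicit Arguments.

Theorem lemma3p3 (K : fieldType) (p : nat) :
  p \in [pchar K] -> (5 <= p)%N -> (p %% 6 = 5)%N ->
  [/\ ~ (exists q : {mpoly K[2]},
           d2ab K p = ('X_(inord 1) - 'X_(inord 0)) * q),
      ~~ root (c2 K p) 2 /\ ~~ root (c2 K p) (-2)
    & separable_poly (c2 K p)].
Proof.
move=> hp p5 p6.
have P1 := part1 hp p5 p6.
have [q Eq] : exists q, p = (6 * q + 5)%N by exists (p %/ 6)%N; move: p6; lia.
subst p.
have hN : (3 * q + 2 <= 2 * (2 * q + 1))%N by lia.
have cc0 : ('C(6 * q + 4, 4 * q + 3)%:R : K) != 0 by apply: (bin_neq0 hp); lia.
have E : c2 K (6 * q + 5) = ('C(6 * q + 4, 4 * q + 3)%:R : K) *: gpoly K (2 * q + 1) (3 * q + 2).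
  by rewrite c2E scaler_nat.
have bn : ('C(2 * (2 * q + 1), 3 * q + 2)%:R : K) != 0 by apply: (bin_neq0 hp); lia.
have G2 : ~~ root (gpoly K (2 * q + 1) (3 * q + 2)) 2.
  have := @gpoly_pm2 K _ _ 1 (expr1n _ _) hN; rewrite mulr1 /root => ->.
  by rewrite expr1n mul1r.
have Gm2 : ~~ root (gpoly K (2 * q + 1) (3 * q + 2)) (-2).
  have hc : (-1 : K) ^+ 2 = 1 by rewrite sqrrN expr1n.
  have := gpoly_pm2 hc hN; rewrite mulrN1 /root => ->.
  by rewrite mulf_neq0 // expf_neq0 // oppr_eq0 oner_neq0.
have G0 : gpoly K (2 * q + 1) (3 * q + 2) != 0.
  by apply: contraNneq G2 => ->; rewrite root0.
have sG : (size (gpoly K (2 * q + 1) (3 * q + 2)) <= 6 * q + 5)%N.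
  by apply: leq_trans (size_gpoly K hN) _; lia.
have sepG := sep_ode hp sG G0 G2 Gm2 (gode K hN).
split => //; first by rewrite E !rootZ.
rewrite E; apply: dvdp_separable sepG; rewrite dvdpZl // dvdpp.
Qed.
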